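(* Let $m>0$, $\gamma>0$, $\alpha,\beta>0$, $c_k=k^{-(1+\alpha\beta)}$, $\lambda_k=k^{-\beta}$ for $k\geq1$, and let $s$ satisfy $0\leq 2s<\alpha\beta$. Then the linear map $L$ defined on $\mathcal{H}_{-s}$ by $$L(x,v,z_1,z_2,\dots)=\Big(v,\ -\tfrac{\gamma}{m}v-\tfrac1m\sum_{k\geq1}\sqrt{c_k}\,z_k,\ -\lambda_1z_1+\sqrt{c_1}\,v,\ -\lambda_2z_2+\sqrt{c_2}\,v,\ \dots\Big)$$ is a bounded linear operator from $\mathcal{H}_{-s}$ to $\mathcal{H}_{-s}$.
   Context: $\mathcal{H}_{-s}$ is the Hilbert space of real sequences $X=(x,v,z_1,z_2,\dots)$ with norm $\|X\|_{-s}^2=x^2+v^2+\sum_{k\geq1}k^{-2s}z_k^2<\infty$. *)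

(* Defs.v *)
From Stdlib Require Import Reals.
From Coquelicot Require Import Coquelicot.
Open Scope R_scope.

(* An element X = (x, v, z_1, z_2, ...) of the sequence space.
   Convention: hz X k stands for z_{k+1} (k : nat, k >= 0). *)
Record Hseq := mkHseq { hx : R; hv : R; hz : nat -> R }.

Definition weight (s : R) (k : nat) : R := Rpower (INR (S k)) (- (2 * s)).

Definition in_H (s : R) (X : Hseq) : Prop :=
  ex_series (fun k => weight s k * (hz X k) ^ 2).

Definition normH (s : R) (X : Hseq) : R :=
  sqrt (hx X ^ 2 + hv X ^ 2 + Series (fun k => weight s k * (hz X k) ^ 2)).

Definition Hadd (X Y : Hseq) : Hseq :=
  mkHseq (hx X + hx Y) (hv X + hv Y) (fun k => hz X k + hz Y k).
Definition Hscale (t : R) (X : Hseq) : Hseq :=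
  mkHseq (t * hx X) (t * hv X) (fun k => t * hz X k).

Definition cc (alpha beta : R) (k : nat) : R := Rpower (INR (S k)) (- (1 + alpha * beta)).
Definition lam (beta : R) (k : nat) : R := Rpower (INR (S k)) (- beta).

Definition Lop (m gamma alpha beta : R) (X : Hseq) : Hseq :=
  mkHseq (hv X)
         (- (gamma / m) * hv X - / m * Series (fun k => sqrt (cc alpha beta k) * hz X k))
         (fun k => - lam beta k * hz X k + sqrt (cc alpha beta k) * hv X).

(* Main.v *)
Require Import Defs.
From Stdlib Require Import Reals Lra Psatz FunctionalExtensionality.
From Coquelicot Require Import Coquelicot.
Open Scope R_scope.

Lemma Rpow_le1 (x y : R) : 1 <= x -> y <= 0 -> 0 < Rpower x y <= 1.
Proof.
  intros Hx Hy. unfold Rpower. split. apply exp_pos.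
  assert (Hl : 0 <= ln x) by (rewrite <- ln_1; apply ln_le; lra).
  assert (H : y * ln x <= 0) by nra.
  destruct (Req_dec (y * ln x) 0) as [E|E].
  - rewrite E, exp_0; lra.
  - rewrite <- exp_0. left. apply exp_increasing. lra.
Qed.

Lemma Series_nonneg (a : nat -> R) : (forall n, 0 <= a n) -> ex_series a -> 0 <= Series a.
Proof.
  intros H He.
  assert (E : Series (fun _ => 0) = 0).
  { rewrite (Series_ext _ (fun n => 0 * a n)) by (intros; ring).
    rewrite Series_scal_l; ring. }
  rewrite <- E. apply Series_le; auto. intros; split; [lra| auto].
Qed.

Lemma mvt_step (x q : R) : 0 < x -> 0 < q ->
  Rpower (x + 1) (- (1 + q)) <= (Rpower x (- q) - Rpower (x + 1) (- q)) / q.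
Proof.
  intros Hx Hq.
  destruct (MVT_cor2 (fun t => Rpower t (- q)) (fun t => - q * Rpower t (- q - 1)) x (x + 1))
    as [c [Hc1 Hc2]]; [lra| |].
  { intros c Hc. apply derivable_pt_lim_power. lra. }
  assert (Hmon : Rpower (x + 1) (- (1 + q)) <= Rpower c (- q - 1)).
  { replace (- q - 1) with (- (1 + q)) by ring.
    rewrite !Rpower_Ropp. apply Rinv_le_contravar.
    - unfold Rpower; apply exp_pos.
    - apply Rle_Rpower_l; lra. }
  apply (Rmult_le_reg_l q); [lra|].
  replace (q * ((Rpower x (- q) - Rpower (x + 1) (- q)) / q))
    with (Rpower x (- q) - Rpower (x + 1) (- q)) by (field; lra).
  replace (Rpower x (- q) - Rpower (x + 1) (- q)) with (q * Rpower c (- q - 1)) by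
    (replace (x + 1 - x) with 1 in Hc1 by ring; lra).
  nra.
Qed.

Lemma pseries (q : R) : 0 < q -> ex_series (fun k => Rpower (INR (S k)) (- (1 + q))).
Proof.
  intros Hq. apply ex_series_incr_1.
  set (a := fun k => Rpower (INR (S (S k))) (- (1 + q))).
  set (u := fun k => Rpower (INR (S k)) (- q)).
  assert (Hu : forall k, 0 < u k) by (intros; unfold u, Rpower; apply exp_pos).
  assert (Ha : forall k, 0 <= a k) by (intros; unfold a, Rpower; left; apply exp_pos).
  assert (Hstep : forall k, a k <= (u k - u (S k)) / q).
  { intros k. unfold a, u. rewrite (S_INR (S k)). apply mvt_step; auto.
    apply lt_0_INR; lia. }
  assert (Hsum : forall n, sum_f_R0 a n <= (u 0%nat - u (S n)) / q).
  { induction n as [|n IH]; simpl.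
    - apply Hstep.
    - specialize (Hstep (S n)). unfold Rdiv in *. lra. }
  apply ex_series_Reals_1. apply growing_cv.
  - intros n. simpl. specialize (Ha (S n)). lra.
  - exists (u 0%nat / q). intros x [i ->].
    specialize (Hsum i). specialize (Hu (S i)).
    assert (0 < / q) by (apply Rinv_0_lt_compat; lra).
    unfold Rdiv in *. nra.
Qed.

Definition rr (alpha beta s : R) (k : nat) := Rpower (INR (S k)) (- (1 + (alpha * beta - 2 * s))).

Lemma facts (alpha beta s : R) (k : nat) : 0 < beta -> 0 <= 2 * s ->
  0 < weight s k <= 1 /\ 0 < lam beta k <= 1 /\ 0 < rr alpha beta s k /\
  cc alpha beta k = rr alpha beta s k * weight s k.
Proof.
  intros Hb Hs.
  assert (H1 : 1 <= INR (S k)) by (rewrite S_INR; pose proof (pos_INR k); lra).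
  split; [apply Rpow_le1; lra|]. split; [apply Rpow_le1; lra|].
  split; [unfold rr, Rpower; apply exp_pos|].
  unfold cc, rr, weight. rewrite <- Rpower_plus. f_equal. ring.
Qed.

Lemma AM (a b e : R) : 0 < e -> a * b <= a ^ 2 * (e / 2) + b ^ 2 * / (2 * e).
Proof.
  intros He.
  assert (E : a ^ 2 * (e / 2) + b ^ 2 * / (2 * e) - a * b = (e * a - b) ^ 2 * / (2 * e))
    by (field; lra).
  assert (0 <= (e * a - b) ^ 2 * / (2 * e)).
  { apply Rmult_le_pos. apply pow2_ge_0. left; apply Rinv_0_lt_compat; lra. }
  lra.
Qed.

Lemma absbound (alpha beta s e z : R) (k : nat) : 0 < beta -> 0 <= 2 * s -> 0 < e ->
  Rabs (sqrt (cc alpha beta k) * z) <=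
  rr alpha beta s k * (e / 2) + (weight s k * z ^ 2) * / (2 * e).
Proof.
  intros Hb Hs He. destruct (facts alpha beta s k Hb Hs) as [Hw [Hl [Hr Hc]]].
  rewrite Hc, sqrt_mult by lra.
  rewrite Rabs_mult, Rabs_mult, !Rabs_pos_eq by apply sqrt_pos.
  rewrite Rmult_assoc.
  eapply Rle_trans. apply (AM _ _ e He).
  replace (sqrt (rr alpha beta s k) ^ 2) with (rr alpha beta s k)
    by (simpl; rewrite Rmult_1_r, sqrt_sqrt; lra).
  replace ((sqrt (weight s k) * Rabs z) ^ 2) with (weight s k * z ^ 2).
  lra.
  rewrite Rpow_mult_distr, RPow_abs. simpl. rewrite !Rmult_1_r.
  rewrite sqrt_sqrt by lra. rewrite Rabs_pos_eq by nra. ring.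
Qed.

Lemma zbound (alpha beta s z v : R) (k : nat) : 0 < beta -> 0 <= 2 * s ->
  0 <= weight s k * (- lam beta k * z + sqrt (cc alpha beta k) * v) ^ 2 <=
  weight s k * z ^ 2 * 2 + rr alpha beta s k * (2 * v ^ 2).
Proof.
  intros Hb Hs. destruct (facts alpha beta s k Hb Hs) as [Hw [Hl [Hr Hc]]].
  set (w := weight s k) in *. set (l := lam beta k) in *. set (r := rr alpha beta s k) in *.
  assert (Hsq : sqrt (cc alpha beta k) ^ 2 = r * w).
  { simpl. rewrite Rmult_1_r, sqrt_sqrt; [lra|]. rewrite Hc. nra. }
  set (t := sqrt (cc alpha beta k)) in *.
  split. apply Rmult_le_pos; [lra| apply pow2_ge_0].
  assert (H1 : (- l * z + t * v) ^ 2 <= 2 * (l ^ 2 * z ^ 2) + 2 * (t ^ 2 * v ^ 2)) by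
    (pose proof (pow2_ge_0 (l * z + t * v)); nra).
  assert (H2 : l ^ 2 * z ^ 2 <= z ^ 2) by (assert (l^2 <= 1) by nra; pose proof (pow2_ge_0 z); nra).
  assert (H3 : w * (t ^ 2 * v ^ 2) <= r * v ^ 2).
  { rewrite Hsq. assert (w * (r * w) <= r) by nra. pose proof (pow2_ge_0 v); nra. }
  pose proof (pow2_ge_0 z). nra.
Qed.

Theorem proposition3p1 (m gamma alpha beta s : R) :
  0 < m -> 0 < gamma -> 0 < alpha -> 0 < beta ->
  0 <= 2 * s -> 2 * s < alpha * beta ->
  (forall X, in_H s X -> ex_series (fun k => sqrt (cc alpha beta k) * hz X k)) /\
  (forall X, in_H s X -> in_H s (Lop m gamma alpha beta X)) /\
  (forall (t : R) X Y, in_H s X -> in_H s Y ->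
     Lop m gamma alpha beta (Hadd (Hscale t X) Y)
     = Hadd (Hscale t (Lop m gamma alpha beta X)) (Lop m gamma alpha beta Y)) /\
  (exists C : R, 0 <= C /\
     forall X, in_H s X -> normH s (Lop m gamma alpha beta X) <= C * normH s X).
Proof.
  intros Hm Hg Ha Hb Hs Hsab.
  assert (Hr : ex_series (rr alpha beta s)) by (apply pseries; lra).
  set (A := Series (rr alpha beta s)).
  assert (HA : 0 <= A).
  { apply Series_nonneg; auto. intros k. destruct (facts alpha beta s k Hb Hs) as [_ [_ [H _]]]; lra. }
  assert (HT : forall X e, in_H s X -> 0 < e ->
    ex_series (fun k => Rabs (sqrt (cc alpha beta k) * hz X k)) /\
    Series (fun k => Rabs (sqrt (cc alpha beta k) * hz X k)) <=
      A * (e / 2) + Series (fun k => weight s k * hz X k ^ 2) * / (2 * e)).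
  { intros X e HX He.
    assert (Hb2 : ex_series (fun k => rr alpha beta s k * (e / 2) + (weight s k * hz X k ^ 2) * / (2 * e))).
    { apply (ex_series_ext (fun n => plus (rr alpha beta s n * (e / 2)) (weight s n * hz X n ^ 2 * / (2 * e)))).
      intros; reflexivity.
      apply (ex_series_plus (fun n => rr alpha beta s n * (e / 2)) (fun n => weight s n * hz X n ^ 2 * / (2 * e)));
        apply ex_series_scal_r; auto. }
    assert (Hpt : forall k, Rabs (sqrt (cc alpha beta k) * hz X k) <=
       rr alpha beta s k * (e / 2) + (weight s k * hz X k ^ 2) * / (2 * e)).
    { intros k; apply absbound; auto. }
    assert (Hex : ex_series (fun k => Rabs (sqrt (cc alpha beta k) * hz X k))).
    { eapply (ex_series_le (K:=R_AbsRing) (V:=R_CompleteNormedModule)); [|exact Hb2]. intros k. change (norm ?x) with (Rabs x).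
      rewrite Rabs_Rabsolu. apply Hpt. }
    split; auto.
    eapply Rle_trans. apply Series_le; [|exact Hb2]. intros k; split; [apply Rabs_pos| apply Hpt].
    rewrite Series_plus by (apply ex_series_scal_r; auto).
    rewrite !Series_scal_r. unfold A. lra. }
  assert (P1 : forall X, in_H s X -> ex_series (fun k => sqrt (cc alpha beta k) * hz X k)).
  { intros X HX. apply ex_series_Rabs. apply (HT X 1 HX Rlt_0_1). }
  assert (HZ : forall X, in_H s X ->
     ex_series (fun k => weight s k * hz X k ^ 2 * 2 + rr alpha beta s k * (2 * hv X ^ 2))).
  { intros X HX.
    apply (ex_series_ext (fun n => plus (weight s n * hz X n ^ 2 * 2) (rr alpha beta s n * (2 * hv X ^ 2)))).
    intros; reflexivity.
    apply (ex_series_plus (fun n => weight s n * hz X n ^ 2 * 2) (fun n => rr alpha beta s n * (2 * hv X ^ 2))); apply ex_series_scal_r; auto. }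
  assert (P2 : forall X, in_H s X -> in_H s (Lop m gamma alpha beta X)).
  { intros X HX. unfold in_H; simpl.
    eapply (ex_series_le (K:=R_AbsRing) (V:=R_CompleteNormedModule)); [|exact (HZ X HX)]. intros k. change (norm ?x) with (Rabs x).
    destruct (zbound alpha beta s (hz X k) (hv X) k Hb Hs) as [Z1 Z2].
    rewrite Rabs_pos_eq by lra. lra. }
  split; [exact P1|]. split; [exact P2|]. split.
  - intros t X Y HX HY. unfold Lop, Hadd, Hscale; simpl. f_equal.
    + rewrite (Series_ext _ (fun k => (sqrt (cc alpha beta k) * hz X k) * t + sqrt (cc alpha beta k) * hz Y k))
        by (intros; ring).
      rewrite Series_plus by (try apply ex_series_scal_r; auto).
      rewrite Series_scal_r. ring.
    + apply functional_extensionality; intros k; ring.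
  - set (g := gamma / m). set (im := / m).
    set (K := 3 + 2 * g ^ 2 + 2 * A + im ^ 2 * (A + 1) ^ 2 / 2).
    assert (HK : 0 <= K).
    { unfold K. pose proof (pow2_ge_0 g). pose proof (pow2_ge_0 im). pose proof (pow2_ge_0 (A+1)). nra. }
    exists (sqrt K). split; [apply sqrt_pos|].
    intros X HX.
    set (S := Series (fun k => weight s k * hz X k ^ 2)).
    assert (HS : 0 <= S).
    { apply Series_nonneg; auto. intros k. destruct (facts alpha beta s k Hb Hs) as [H _].
      pose proof (pow2_ge_0 (hz X k)); nra. }
    set (T := Series (fun k => sqrt (cc alpha beta k) * hz X k)).
    set (N2 := hx X ^ 2 + hv X ^ 2 + S).
    assert (HN2 : 0 <= N2) by (unfold N2; pose proof (pow2_ge_0 (hx X)); pose proof (pow2_ge_0 (hv X)); lra).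
    set (N := sqrt N2).
    assert (HNN : N * N = N2) by (apply sqrt_sqrt; auto).
    assert (HN0 : 0 <= N) by apply sqrt_pos.
    assert (HTe : forall e, 0 < e -> Rabs T <= A * (e / 2) + S * / (2 * e)).
    { intros e He. destruct (HT X e HX He) as [H1 H2]. eapply Rle_trans; [|exact H2].
      apply Series_Rabs; auto. }
    assert (HTb : Rabs T <= (A + 1) * N / 2).
    { destruct (Req_dec N 0) as [E|E].
      - assert (S = 0) by (unfold N2 in HNN; rewrite E in HNN;
          pose proof (pow2_ge_0 (hx X)); pose proof (pow2_ge_0 (hv X)); lra).
        rewrite E. destruct (Req_dec (Rabs T) 0) as [E2|E2]; [lra|].
        pose proof (Rabs_pos T).
        specialize (HTe (Rabs T / (A + 1))). rewrite H in HTe.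
        assert (0 < Rabs T / (A + 1)) by (apply Rdiv_lt_0_compat; lra).
        specialize (HTe H1).
        assert (A * (Rabs T / (A + 1) / 2) < Rabs T).
        { apply (Rmult_lt_reg_r (2 * (A + 1))). lra.
          replace (A * (Rabs T / (A + 1) / 2) * (2 * (A + 1))) with (A * Rabs T) by (field; lra).
          nra. }
        lra.
      - assert (HNp : 0 < N) by lra.
        specialize (HTe N HNp).
        assert (S * / (2 * N) <= N / 2).
        { apply (Rmult_le_reg_r (2 * N)). lra.
          replace (S * / (2 * N) * (2 * N)) with S by (field; lra).
          unfold N2 in HNN. pose proof (pow2_ge_0 (hx X)); pose proof (pow2_ge_0 (hv X)). nra. }
        lra. }
    assert (HT2 : T ^ 2 <= ((A + 1) * N / 2) ^ 2).
    { rewrite <- (pow2_abs T). apply pow_incr. split; [apply Rabs_pos | exact HTb]. }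
    assert (HZs : Series (fun k => weight s k * hz (Lop m gamma alpha beta X) k ^ 2) <= 2 * S + 2 * A * hv X ^ 2).
    { eapply Rle_trans. apply Series_le; [|exact (HZ X HX)].
      intros k; simpl. apply zbound; auto.
      rewrite Series_plus by (apply ex_series_scal_r; auto).
      rewrite !Series_scal_r. unfold S, A. lra. }
    change (normH s X) with N.
    replace (sqrt K * N) with (sqrt (K * N2)) by (unfold N; rewrite sqrt_mult; auto).
    unfold normH. apply sqrt_le_1_alt. simpl hx; simpl hv.
    fold T. fold g. fold im.
    assert (Hv2 : (- g * hv X - im * T) ^ 2 <= 2 * g ^ 2 * hv X ^ 2 + 2 * im ^ 2 * T ^ 2).
    { pose proof (pow2_ge_0 (g * hv X - im * T)). nra. }
    assert (Him : im ^ 2 * T ^ 2 <= im ^ 2 * (((A + 1) * N / 2) ^ 2)).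
    { apply Rmult_le_compat_l; [apply pow2_ge_0| exact HT2]. }
    replace (((A + 1) * N / 2) ^ 2) with ((A + 1) ^ 2 * N2 / 4) in Him by (rewrite <- HNN; field).
    assert (Hvn : hv X ^ 2 <= N2) by (unfold N2; pose proof (pow2_ge_0 (hx X)); lra).
    assert (HSn : S <= N2) by (unfold N2; pose proof (pow2_ge_0 (hx X)); pose proof (pow2_ge_0 (hv X)); lra).
    unfold K.
    pose proof (pow2_ge_0 g). pose proof (pow2_ge_0 (hv X)).
    assert (g ^ 2 * hv X ^ 2 <= g ^ 2 * N2) by (apply Rmult_le_compat_l; auto).
    assert (A * hv X ^ 2 <= A * N2) by (apply Rmult_le_compat_l; auto).
    nra.
Qed.
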